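(* Let $(X,\|\cdot\|)$ be a normed linear space over $\mathbb{R}$ or $\mathbb{C}$, and let $a,x_1,\dots,x_n\in X\setminus\{0\}$ satisfy $\|x_j-a\|\le\|a\|$ for each $j\in\{1,\dots,n\}$. Then for any $p_1,\dots,p_n\ge0$ with $\sum_{j=1}^n p_j=1$, $$\frac{\big\|\sum_{j=1}^n p_jx_j\big\|}{\sum_{j=1}^n p_j\|x_j\|}\ \ge\ \frac{\|a\|-\max_{1\le j\le n}\|x_j-a\|}{2\|a\|}\ (\ge0).$$ *)

(* Defs.v *)
From HB Require Import structures.
From mathcomp Require Import all_boot all_order all_algebra.
From mathcomp Require Import all_classical all_reals all_analysis.
From mathcomp Require Import complex.

(* Main.v *)
Require Import Defs.
From HB Require Import structures.
From mathcomp Require Import all_boot all_order all_algebra.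
From mathcomp Require Import all_classical all_reals all_analysis.
From mathcomp Require Import complex.
Import Order.TTheory GRing.Theory Num.Theory.
Import numFieldNormedType.Exports.
Local Open Scope ring_scope.

Lemma bigmax_seq (K : numDomainType) (I : eqType) (s : seq I) (F : I -> K) (A : K) :
  0 <= A -> (forall j, 0 <= F j <= A) ->
  0 <= \big[Num.max/0]_(j <- s) F j /\ \big[Num.max/0]_(j <- s) F j <= A /\
  forall j, j \in s -> F j <= \big[Num.max/0]_(j <- s) F j.
Proof.
move=> A0 HF; elim: s => [|i s [M0 [MA MF]]].
  by rewrite big_nil; split => //; split => //.
rewrite big_cons.
set M := \big[_/_]_(_ <- _) _ in M0 MA MF *.
have /andP[F0 FA] := HF i.
have cmp : F i >=< M by apply: real_comparable; apply: ger0_real.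
split; first by rewrite comparable_le_max // M0 orbT.
split; first by rewrite comparable_ge_max // MA FA.
move=> j; rewrite in_cons comparable_le_max // => /orP[/eqP ->|js].
  by rewrite lexx.
by rewrite MF // orbT.
Qed.

Lemma bigmax_props (K : numDomainType) (n : nat) (F : 'I_n -> K) (A : K) :
  0 <= A -> (forall j, 0 <= F j <= A) ->
  0 <= \big[Num.max/0]_(j < n) F j /\ \big[Num.max/0]_(j < n) F j <= A /\ forall j, F j <= \big[Num.max/0]_(j < n) F j.
Proof.
move=> A0 HF; have [M0 [MA MF]] := @bigmax_seq K _ (index_enum 'I_n) F A A0 HF.
by split => //; split => // j; apply: MF; rewrite mem_index_enum.
Qed.

Lemma gen (K : numFieldType) (V : normedModType K) (n : nat) (a : V) (x : 'I_n -> V) (p : 'I_n -> K) :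
    a != 0 -> (forall j, x j != 0) ->
    (forall j, `|(x j - a)| <= `|a|) ->
    (forall j, 0 <= p j) -> \sum_(j < n) p j = 1 ->
    `|\sum_(j < n) p j *: x j| / (\sum_(j < n) p j * `|x j|)
      >= (`|a| - \big[Num.max/0]_(j < n) `|(x j - a)|) / (2 * `|a|)
    /\ (`|a| - \big[Num.max/0]_(j < n) `|(x j - a)|) / (2 * `|a|) >= 0.
Proof.
move=> a0 _ Hxa p0 p1.
have A0 : 0 < `|a| by rewrite normr_gt0.
have HB : forall j, 0 <= `|x j - a| <= `|a| by move=> j; rewrite normr_ge0 Hxa.
have [M0 [MA MF]] := @bigmax_props K n (fun j => `|x j - a|) `|a| (ltW A0) HB.
set M := \big[_/_]_(_ < _) _ in M0 MA MF *.
set N := `|\sum_(j < n) p j *: x j|; set D := \sum_(j < n) p j * `|x j|.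
have A2 : 0 < 2 * `|a| by rewrite mulr_gt0.
have Q0 : 0 <= (`|a| - M) / (2 * `|a|) by rewrite divr_ge0 ?subr_ge0 // ltW.
split => //.
have ND : N <= D.
  apply: le_trans (ler_norm_sum _ _ _) _; rewrite le_eqVlt; apply/orP; left.
  apply/eqP/eq_bigr => j _; by rewrite normrZ ger0_norm.
have NA : `|a| - M <= N.
  rewrite /N.
  have -> : \sum_(j < n) p j *: x j = a + \sum_(j < n) p j *: (x j - a).
    rewrite -[a in a + _]scale1r -p1 scaler_suml -big_split /=.
    by apply: eq_bigr => j _; rewrite -scalerDr addrC subrK.
  apply: le_trans (lerB_normD _ _ ); rewrite lerD2l lerN2.
  apply: le_trans (ler_norm_sum _ _ _) _.
  rewrite -[M]mul1r -p1 mulr_suml; apply: ler_sum => j _.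
  by rewrite normrZ ger0_norm // ler_wpM2l.
have D2 : D <= 2 * `|a|.
  apply: (@le_trans _ _ (\sum_(j < n) p j * (`|a| + M))).
    apply: ler_sum => j _; apply: ler_wpM2l => //.
    have h : `|x j| <= `|a| + `|x j - a|.
      by rewrite {1}(_ : x j = a + (x j - a)) ?ler_normD // addrC subrK.
    by apply: le_trans h _; rewrite lerD2l.
  by rewrite -mulr_suml p1 mul1r mulr2n mulrDl mul1r lerD2l.
have [D0|D0] := eqVneq D 0.
  rewrite D0 invr0 mulr0; apply: mulr_le0_ge0; last by rewrite invr_ge0 ltW.
  by rewrite -D0; apply: le_trans NA ND.
have Dp : 0 < D by rewrite lt_def D0 /D sumr_ge0 // => j _; rewrite mulr_ge0.
rewrite ler_pdivlMr //; apply: le_trans (ler_wpM2l Q0 D2) _.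
by rewrite divfK // gt_eqF.
Qed.

Theorem proposition2p2 (R : realType) :
  (forall (V : normedModType R) (n : nat) (a : V) (x : 'I_n -> V) (p : 'I_n -> R),
    a != 0 -> (forall j, x j != 0) ->
    (forall j, `|(x j - a)| <= `|a|) ->
    (forall j, 0 <= p j) -> \sum_(j < n) p j = 1 ->
    `|\sum_(j < n) p j *: x j| / (\sum_(j < n) p j * `|x j|)
      >= (`|a| - \big[Num.max/0]_(j < n) `|(x j - a)|) / (2 * `|a|)
    /\ (`|a| - \big[Num.max/0]_(j < n) `|(x j - a)|) / (2 * `|a|) >= 0)
  /\
  (forall (V : normedModType (complex R)) (n : nat) (a : V) (x : 'I_n -> V)
      (p : 'I_n -> complex R),
    a != 0 -> (forall j, x j != 0) ->
    (forall j, `|(x j - a)| <= `|a|) ->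
    (forall j, 0 <= p j) -> \sum_(j < n) p j = 1 ->
    `|\sum_(j < n) p j *: x j| / (\sum_(j < n) p j * `|x j|)
      >= (`|a| - \big[Num.max/0]_(j < n) `|(x j - a)|) / (2 * `|a|)
    /\ (`|a| - \big[Num.max/0]_(j < n) `|(x j - a)|) / (2 * `|a|) >= 0).
Proof.
split=> V n a x p; exact: gen.
Qed.
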